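(* Let $G$ be a strictly pseudo-solvable group such that $\{2,3,5\}$ forms a triangle in $\overline\Gamma(G)$. Then for every prime $p$ dividing $|G|$ with $p\neq 2,5$ (and $p\ne 3$), $3\text-p$ is not an edge of $\overline\Gamma(G)$.
   Context: For a finite group $G$, the prime graph $\Gamma(G)$ has vertex set the prime divisors of $|G|$, with distinct primes $p,q$ adjacent iff $G$ has an element of order $pq$; $\overline\Gamma(G)$ is its complement graph (so $p\text-q$ is an edge of $\overline\Gamma(G)$ iff $G$ has no element of order $pq$). A finite group is pseudo-solvable if each composition factor is cyclic or isomorphic to $A_5$; it is strictly pseudo-solvable if it is pseudo-solvable but not solvable. *)

(* Defs.v *)
From mathcomp Require Import all_boot all_fingroup all_solvable.
Set Implicit Arguments. Unset Strict Implicit. Unset Printing Implicit Defensive.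
Local Open Scope group_scope.

Definition pg_adj (gT : finGroupType) (G : {set gT}) (p q : nat) : Prop :=
  exists2 x, x \in G & #[x] = (p * q)%N.

Definition cpg_edge (gT : finGroupType) (G : {set gT}) (p q : nat) : Prop :=
  [/\ prime p, prime q, p %| #|G|, q %| #|G| & p != q] /\ ~ pg_adj G p q.

Definition good_factors (gT : finGroupType) (G : {group gT}) (s : seq {group gT}) : bool :=
  all (fun xy : {group gT} * {group gT} =>
         cyclic (xy.1 / xy.2) || ((xy.1 / xy.2) \isog Alt 'I_5))
      (zip (G :: s) s).

(* Pseudo-solvable: all composition factors cyclic or isomorphic to A5
   (checked for every composition series; by Jordan-Hoelder this is
   independent of the series). *)
Definition pseudo_solvable (gT : finGroupType) (G : {group gT}) : Prop :=
  forall s : seq {group gT}, comps G s -> good_factors G s.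

Definition strictly_pseudo_solvable (gT : finGroupType) (G : {group gT}) : Prop :=
  pseudo_solvable G /\ ~~ solvable G.

(* Main.v *)
Require Import Defs.
From mathcomp Require Import all_boot all_fingroup all_solvable.
From mathcomp Require ssralg.
Set Implicit Arguments. Unset Strict Implicit. Unset Printing Implicit Defensive.
Local Open Scope group_scope.

Section Helpers.
Variable gT : finGroupType.
Implicit Types (G H K : {group gT}) (x y : gT).

Lemma elt_order x d : d %| #[x] -> #[x ^+ (#[x] %/ d)] = d.
Proof.
move=> dv; have o0 := order_gt0 x.
rewrite orderXdiv ?dvdn_div //.
case/dvdnP: dv o0 => k ok o0; rewrite ok.
have d0 : 0 < d by move: o0; rewrite ok; case: d {ok} => //; rewrite muln0.
have k0 : 0 < k by move: o0; rewrite ok; case: k {ok} => //.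
by rewrite mulnK // mulKn.
Qed.

Lemma adj_dvd G x q r : x \in G -> (q * r) %| #[x] -> pg_adj G q r.
Proof. by move=> Gx dv; exists (x ^+ (#[x] %/ (q * r))); rewrite ?groupX ?elt_order. Qed.

Lemma adj_sub G K q r : K \subset G -> pg_adj K q r -> pg_adj G q r.
Proof. by move=> sKG [x Kx ox]; exists x; rewrite ?(subsetP sKG). Qed.

Lemma adj_commute G x y q r : x \in G -> y \in G -> commute x y ->
  coprime #[x] #[y] -> q %| #[x] -> r %| #[y] -> pg_adj G q r.
Proof.
move=> Gx Gy cxy co qx ry; apply: (adj_dvd (x := x * y)); first by rewrite groupM.
by rewrite orderM // dvdn_mul.
Qed.

Lemma p_elt_dvd (p : nat) x : p.-elt x -> x != 1 -> p %| #[x].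
Proof.
move=> px ntx; have o1 : 1 < #[x] by rewrite order_gt1.
have pr := pdiv_prime o1.
have : pdiv #[x] \in \pi(#[x]) by rewrite pi_pdiv.
move/(pnatPpi px); rewrite inE => /eqP <-; exact: pdiv_dvd.
Qed.

Lemma coprime_pq (p q m n : nat) : prime p -> prime q -> p != q ->
  p.-nat m -> q.-nat n -> coprime m n.
Proof.
move=> pp pq npq pm qn; apply: (pnat_coprime pm).
by apply: sub_in_pnat qn => r _; rewrite !inE => /eqP->; rewrite eq_sym.
Qed.

End Helpers.

Module KeyMod.
Import ssralg GRing.Theory FiniteModule.

Section Key.
Variable gT : finGroupType.

Lemma conj_tc (Q : {group gT}) (t : gT) : t \in 'N(Q) ->
  (forall c, c \in Q -> commute c t -> c = 1) ->
  forall c, c \in Q -> exists2 d, d \in Q & t * c = t ^ d.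
Proof.
move=> nQt cQt1 c Qc.
pose f d := (d^-1 ^ t) * d.
have ft d : t * f d = t ^ d by rewrite /f !conjgE !mulgA mulgV mul1g.
have fQ d : d \in Q -> f d \in Q by move=> Qd; rewrite groupM ?memJ_norm ?groupV.
have finj : {in Q &, injective f}.
  move=> d1 d2 Q1 Q2 E.
  have E' : t ^ d1 = t ^ d2 by rewrite -!ft E.
  have Ex : t ^ (d1 * d2^-1) = t by rewrite conjgM E' conjgK.
  have cx : commute (d1 * d2^-1) t.
    by apply: commute_sym; apply/commgP; apply/conjg_fixP.
  have := cQt1 _ (groupM Q1 (groupVr Q2)) cx.
  by move/eqP; rewrite -eq_mulgV1 => /eqP.
have : c \in [set f d | d in Q].
  have : [set f d | d in Q] \subset Q by apply/subsetP => _ /imsetP[d Qd ->]; apply: fQ.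
  move=> sfQ; have -> : [set f d | d in Q] = Q.
    by apply/eqP; rewrite eqEcard sfQ (card_in_imset finj) leqnn.
  exact: Qc.
by case/imsetP => d Qd ->; exists d; rewrite ?ft.
Qed.

Lemma cube (x : gT) : #[x] = 3 -> x * x * x = 1.
Proof. by move=> ox; rewrite -[RHS](expg_order x) ox !expgS expg0 mulg1 mulgA. Qed.

Lemma fix3 (V : {group gT}) (abV : abelian V) (s : gT) : s \in 'N(V) -> #[s] = 3 ->
  (forall v, v \in V -> commute s v -> v = 1) ->
  forall u : fmod_of abV, (u + u ^@ s + u ^@ (s * s) = 0)%R.
Proof.
move=> nVs os fpf u.
set z := (u + u ^@ s + u ^@ (s * s))%R.
have s3 := cube os.
have zs : (z ^@ s = z)%R.
  rewrite /z !actAr -!actrM ?groupM // s3 actr1.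
  by rewrite [LHS]addrC addrA.
have E : fmval z ^ s = fmval z by rewrite -fmvalJ // zs.
have cz : commute s (fmval z).
  by apply: commute_sym; apply/commgP; apply/conjg_fixP.
have := fpf _ (fmodP z) cz => z1.
by apply: fmod_inj; rewrite z1 fmval0.
Qed.

Lemma key (W Q V : {group gT}) (t : gT) (abV : abelian V) :
  t \in W -> Q \subset W ->
  t \in 'N(Q) -> t \in 'N(V) -> Q \subset 'N(V) -> #[t] = 3 ->
  (forall c, c \in Q -> commute c t -> c = 1) ->
  (forall s v, s \in W -> #[s] = 3 -> v \in V -> commute s v -> v = 1) ->
  coprime #|Q| #|V| -> Q \subset 'C(V).
Proof.
move=> Wt sQW nQt nVt nVQ ot cQt fpf coQV.
have nVc c : c \in Q -> c \in 'N(V) by move/(subsetP nVQ).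
pose Nm (z : fmod_of abV) := (\sum_(c in Q) z ^@ c)%R.
have NmQ z q : q \in Q -> (Nm z ^@ q = Nm z)%R.
  move=> Qq; rewrite /Nm actr_sum.
  rewrite (reindex_inj (mulIg q^-1)) /=.
  apply: eq_big => [c | c Qc]; first by rewrite groupMr // groupV.
  by rewrite -actrM ?nVc ?mulgKV.
have fixQ (u : fmod_of abV) q : q \in Q -> (u ^@ q = u)%R.
  move=> Qq.
  have key1 c : c \in Q -> (u + u ^@ t ^@ c + u ^@ c^-1 ^@ t^-1 = 0)%R.
    move=> Qc; have [d Qd sE] := conj_tc nQt cQt Qc.
    have os : #[t * c] = 3 by rewrite sE orderJ.
    have nVs : t * c \in 'N(V) := groupM nVt (nVc c Qc).
    have Ws : t * c \in W := groupM Wt (subsetP sQW c Qc).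
    have := fix3 nVs os (fun v Vv cv => fpf _ v Ws os Vv cv) u.
    have s3 : (t * c) * (t * c) = (t * c)^-1.
      have E3 := cube os.
      by rewrite -[(t * c)^-1]mul1g -E3 mulgK.
    by move=> H; rewrite s3 invMg !actrM ?groupV ?(nVc c Qc) // in H.
  have Sinv : (\sum_(c in Q) u ^@ c^-1 = Nm u)%R.
    rewrite /Nm (reindex_inj invg_inj) /=.
    by apply: eq_big => [c | c _]; rewrite ?groupV ?invgK.
  have E : (u *+ #|Q| = - (Nm (u ^@ t) + Nm u ^@ t^-1))%R.
    have S0 : (\sum_(c in Q) (u + u ^@ t ^@ c + u ^@ c^-1 ^@ t^-1) = 0)%R.
      by apply: big1 => c Qc; apply: key1.
    move: S0; rewrite !big_split /= sumr_const -actr_sum Sinv -addrA => S0.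
    by apply/eqP; rewrite -addr_eq0 /Nm S0.
  have E' : ((u *+ #|Q|) ^@ q = u *+ #|Q|)%R.
    rewrite E actNr actAr NmQ //; congr (- (_ + _))%R.
    rewrite -actrM ?groupV ?(nVc _ Qq) //.
    rewrite (_ : (t^-1 * q = q ^ t * t^-1)%g); last by rewrite conjgE !mulgA mulgK.
    have Qqt : q ^ t \in Q by rewrite memJ_norm.
    by rewrite actrM ?groupV ?(nVc _ Qqt) // NmQ.
  have D : ((u ^@ q - u) *+ #|Q| = 0)%R by rewrite mulrnBl -actZr E' subrr.
  set w := fmval (u ^@ q - u)%R.
  have w1 : w ^+ #|Q| = 1 by rewrite /w -fmvalZ D fmval0.
  have dQ : #[w] %| #|Q| by rewrite order_dvdn w1.
  have dV : #[w] %| #|V| by apply: order_dvdG; apply: fmodP.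
  have : #[w] %| 1 by rewrite -(eqP coQV) dvdn_gcd dQ dV.
  rewrite dvdn1 order_eq1 => /eqP w1'.
  have : (u ^@ q - u = 0)%R by apply: fmod_inj; rewrite -/w w1' fmval0.
  by move/eqP; rewrite subr_eq0 => /eqP.
apply/centsP => q Qq v Vv.
have := fixQ (fmod abV v) q Qq.
move/(congr1 fmval); rewrite fmvalJ ?nVc // !fmodK // => E.
by apply: commute_sym; apply/commgP; apply/conjg_fixP.
Qed.

End Key.

End KeyMod.
Import KeyMod.

Section L12.
Variable gT : finGroupType.

Lemma syl2_12 (A : {group gT}) : #|A| = 12 -> #|'Syl_3(A)| = 4 -> #|'Syl_2(A)| == 1%N.
Proof.
move=> oA oQ3.
pose A3 := [set x : gT | #[x] == 3]; suffices oA3: #|A :&: A3| = 8.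
  have sQ2 P: P \in 'Syl_2(A) -> P :=: A :\: A3.
    rewrite inE pHallE oA p_part -natTrecE /= => /andP[sPA /eqP oP].
    apply/eqP; rewrite eqEcard -(leq_add2l 8) -{1}oA3 cardsID oA oP.
    rewrite andbT subsetD sPA; apply/exists_inP=> -[x] /= Px.
    rewrite inE => /eqP ox; have:= order_dvdG Px; rewrite oP ox => H.
    by have : ~~ (3 %| 4) by []; rewrite H.
  have [/= P sylP] := Sylow_exists 2 A.
  have -> : 'Syl_2(A) = [set P].
    apply/eqP; rewrite eqEsubset [X in _ && X]sub1set [X in _ && X]inE sylP andbT.
    have PS : P \in 'Syl_2(A) by rewrite inE sylP.
    apply/subsetP=> Q sylQ; rewrite inE -val_eqE /=.
    by rewrite (sQ2 Q sylQ) (sQ2 P PS) eqxx.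
  by rewrite cards1.
rewrite -[8]/(4 * 2)%N -{}oQ3 -sum1_card -sum_nat_const.
rewrite (partition_big (fun x => <[x]>%G) [in 'Syl_3(A)]) => [|x]; last first.
  by case/setIP=> Ax; rewrite /= !inE pHallE p_part cycle_subG Ax oA.
apply: eq_bigr => Q; rewrite inE pHallE oA p_part -?natTrecE //=.
case/andP=> sQA /eqP oQ; have:= oQ.
rewrite (cardsD1 1) group1 -sum1_card => [[/= <-]]; apply: eq_bigl => x.
rewrite setIC -val_eqE /= 2!inE in_setD1 -andbA -{4}[x]expg1 -order_dvdn dvdn1.
apply/and3P/andP=> [[/eqP-> _ /eqP <-] | [ntx Qx]]; first by rewrite cycle_id.
have:= order_dvdG Qx; rewrite oQ dvdn_divisors // mem_seq2 (negPf ntx) /=.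
by rewrite eqEcard cycle_subG Qx (subsetP sQA) // oQ /order => /eqP->.
Qed.

Lemma lemma12 (A : {group gT}) : #|A| = 12 ->
  exists (S : {group gT}) (t : gT),
    [/\ S \subset A, S :!=: 1, 2.-group S, t \in A & #[t] = 3 /\ t \in 'N(S)].
Proof.
move=> oA.
have d3 : 3 %| #|A| by rewrite oA.
have [t At ot] := Cauchy (isT : prime 3) d3.
have: #|'Syl_3(A)| \in filter [pred d | d %% 3 == 1%N] (divisors 12).
  by rewrite mem_filter -dvdn_divisors //= -oA card_Syl_dvd ?card_Syl_mod.
rewrite /= mem_seq2 => /orP[n1 | n4].
- have [T sylT nTA] := normal_sylowP _ _ n1.
  have oT : #|T| = 3.
    by move: sylT; rewrite pHallE oA p_part -natTrecE /= => /andP[_ /eqP].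
  have Tt : t \in T by rewrite (mem_normal_Hall sylT nTA) // /p_elt ot pnat_id.
  have sub : t ^: A \subset T :\ 1.
    apply/subsetP => _ /imsetP[a Aa ->].
    rewrite !inE conjg_eq1 -order_eq1 ot /= memJ_norm //.
    by apply: (subsetP (normal_norm nTA)).
  have le2 : #|A : 'C_A[t]| <= 2.
    rewrite index_cent1; apply: leq_trans (subset_leq_card sub) _.
    by have := cardsD1 1 T; rewrite group1 oT add1n => -[<-].
  have d2 : 2 %| #|'C_A[t]|.
    have := Lagrange (subsetIl A 'C[t]); rewrite oA.
    move: le2; case: #|A : _| => [|[|[|]]] //=.
    + by rewrite muln0.
    + by rewrite muln1 => _ ->.
    + move=> _ E; have -> : #|'C_A[t]| = 6 by apply/eqP; rewrite -(eqn_pmul2r (isT : 0 < 2)) E.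
      by [].
  have [c Cc oc] := Cauchy (isT : prime 2) d2.
  move: Cc => /setIP[Ac Ct].
  exists <[c]>%G, t; split => //.
  + by rewrite cycle_subG.
  + by rewrite cycle_eq1 -order_gt1 oc.
  + by rewrite /pgroup -orderE oc.
  + split=> //; apply: (subsetP (cent_sub _)).
    by rewrite cent_cycle cent1C.
- have [S sylS nSA] := normal_sylowP _ _ (syl2_12 oA (eqP n4)).
  have oS : #|S| = 4.
    by move: sylS; rewrite pHallE oA p_part -natTrecE /= => /andP[_ /eqP].
  exists S, t; split => //.
  + by case/andP: nSA.
  + by rewrite -cardG_gt1 oS.
  + exact: pHall_pgroup sylS.
  + by split=> //; apply: (subsetP (normal_norm nSA)).
Qed.

End L12.

Lemma A5data (rT : finGroupType) (B : {group rT}) : B \isog 'Alt_('I_5) ->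
  [/\ #|B| = 60, simple B &
   exists (S : {group rT}) (t : rT),
    [/\ S \subset B, S :!=: 1, 2.-group S, t \in B & #[t] = 3 /\ t \in 'N(S)]].
Proof.
move=> iso.
have oAlt : #|'Alt_('I_5)| = 60.
  by apply: double_inj; rewrite -mul2n card_Alt ?card_ord.
split.
- by rewrite (card_isog iso).
- by rewrite (isog_simple iso) simple_Alt5 ?card_ord.
rewrite isog_sym in iso; case/isogP: iso => f injf fA.
set Ab := 'C_('Alt_('I_5))[ord0 | 'P].
have sAb : Ab \subset 'Alt_('I_5) by apply: subsetIl.
have oAb : #|Ab| = 12.
  rewrite (card_isog (rfd_iso ord0)).
  have c4 : #|{: {y : 'I_5 | y != ord0}}| = 4.
    by rewrite card_sig; have := cardC1 (ord0 : 'I_5); rewrite card_ord.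
  by apply: double_inj; rewrite -mul2n card_Alt c4.
have ofAb : #|f @* Ab| = 12 by rewrite card_injm.
have [S [t [sS ntS pS At [ot nSt]]]] := lemma12 ofAb.
exists S, t; split => //.
- by rewrite -fA (subset_trans sS) ?morphimS.
- by rewrite -fA (subsetP (morphimS f sAb)).
Qed.


Section CaseA.
Variable gT : finGroupType.

Lemma caseA (K H : {group gT}) (p : nat) : prime p -> p != 2 -> p != 3 ->
  H <| K -> K / H \isog 'Alt_('I_5) -> p %| #|H| ->
  ~ pg_adj K 2 3 -> ~ pg_adj K 3 p -> False.
Proof.
move=> pp p2 p3 nHK iso pH no6 no3p.
have [B60 simB [Sb [tb [sSb ntSb pSb Btb [otb nSbt]]]]] := A5data iso.
have [/= P sylP] := Sylow_exists p H.
have sPH := pHall_sub sylP; have pP := pHall_pgroup sylP.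
have sHK := normal_sub nHK; have nHK' := normal_norm nHK.
have ntP : P :!=: 1.
  rewrite -cardG_gt1 (card_Hall sylP) p_part_gt1 mem_primes pp pH andbT.
  by rewrite cardG_gt0.
set X := 'N_K(P).
have KX : H * X = K := Frattini_arg nHK sylP.
have sXK : X \subset K := subsetIl _ _.
have nHX : X \subset 'N(H) := subset_trans sXK nHK'.
set V := 'Z(P).
have abV : abelian V := center_abelian P.
have ntV : V :!=: 1 by rewrite (center_nil_eq1 (pgroup_nil pP)).
have sVP : V \subset P := center_sub P.
have pV : p.-group V := pgroupS sVP pP.
have nVX : X \subset 'N(V) := char_norm_trans (center_char P) (subsetIr K 'N(P)).
have fpfK s v : s \in K -> #[s] = 3 -> v \in V -> commute s v -> v = 1.
  move=> Ks os Vv csv; apply/eqP; apply/negPn/negP => ntv.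
  apply: no3p; apply: (adj_commute (x := s) (y := v)) => //.
  - by rewrite (subsetP sHK) // (subsetP sPH) // (subsetP sVP).
  - rewrite os; apply: (coprime_pq (isT : prime 3) pp _ (pnat_id (isT : prime 3)) (mem_p_elt pV Vv)).
    by rewrite eq_sym.
  - by rewrite os.
  - exact: p_elt_dvd (mem_p_elt pV Vv) ntv.
have XH : X / H = K / H by rewrite -KX quotientMidl.
set M := (X :&: coset H @*^-1 Sb)%G.
set Y1 := (X :&: coset H @*^-1 'N(Sb))%G.
have sMY : M \subset Y1.
  by apply: setIS; apply: morphpreS; apply: normG.
have nMY : M <| Y1.
  rewrite /normal sMY /= normsI //.
    by apply: subset_trans (subsetIl _ _) (normG X).
  by apply: subset_trans (subsetIr _ _) (morphpre_norm _ _).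
have [/= Q sylQ] := Sylow_exists 2 M.
have FrY : M * 'N_Y1(Q) = Y1 := Frattini_arg nMY sylQ.
have [w Nw [Xw tbE]] : exists2 w, w \in 'N(H) & w \in X /\ tb = coset H w.
  have Btb' : tb \in X / H by rewrite XH.
  by case/morphimP: Btb' => w Nw Xw ->; exists w.
have Yw : w \in Y1.
  by apply/setIP; split => //; apply: mem_morphpre => //; move: nSbt; rewrite tbE.
rewrite -FrY in Yw; case/mulsgP: Yw => m n Mm NYn wE.
move: NYn => /setIP [Yn nQn].
have sMX : M \subset X := subsetIl _ _.
have sYX : Y1 \subset X := subsetIl _ _.
have Nm : m \in 'N(H) := subsetP nHX m (subsetP sMX m Mm).
have Nn : n \in 'N(H) := subsetP nHX n (subsetP sYX n Yn).
have Sbm : coset H m \in Sb.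
  by move: Mm => /setIP [_]; case/morphpreP.
have tbE2 : tb = coset H m * coset H n by rewrite tbE wE morphM.
have o3 : #[coset Sb tb] = 3.
  have d : #[coset Sb tb] %| 3 by rewrite -otb (morph_order _ nSbt).
  apply/(prime_nt_dvdP (isT : prime 3)) => //.
  rewrite order_eq1; apply/negP => /eqP e.
  have := mem_p_elt pSb (coset_idr nSbt e); rewrite /p_elt otb => H2.
  by have : ~~ (2.-nat 3) by []; rewrite H2.
have Nbm : coset H m \in 'N(Sb) := subsetP (normG Sb) _ Sbm.
have Nbn : coset H n \in 'N(Sb).
  by have := groupM (groupVr Nbm) nSbt; rewrite tbE2 mulKg.
have d3n : 3 %| #[n].
  have h1 : #[coset H n] %| #[n] by apply: morph_order.
  apply: (dvdn_trans _ h1).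
  have e : coset Sb tb = coset Sb (coset H n).
    rewrite tbE2 morphM //=.
    by rewrite (coset_id Sbm) mul1g.
  by rewrite -o3 e; apply: morph_order.
set t := n ^+ (#[n] %/ 3).
have ot : #[t] = 3 := elt_order d3n.
have Xt : t \in X := groupX _ (subsetP sYX n Yn).
have Kt : t \in K := subsetP sXK t Xt.
have nQt : t \in 'N(Q) := groupX _ nQn.
have sQM : Q \subset M := pHall_sub sylQ.
have pQ : 2.-group Q := pHall_pgroup sylQ.
have sQX : Q \subset X := subset_trans sQM sMX.
have cQt c : c \in Q -> commute c t -> c = 1.
  move=> Qc cct; apply/eqP; apply/negPn/negP => ntc.
  apply: no6; apply: (adj_commute (x := c) (y := t)) => //.
  - by rewrite (subsetP sXK) // (subsetP sQX).
  - rewrite ot; apply: (coprime_pq (isT : prime 2) (isT : prime 3) isT (mem_p_elt pQ Qc)).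
    exact: pnat_id.
  - exact: p_elt_dvd (mem_p_elt pQ Qc) ntc.
  - by rewrite ot.
have coQV : coprime #|Q| #|V|.
  by apply: (coprime_pq (isT : prime 2) pp _ pQ pV); rewrite eq_sym.
have cQV : Q \subset 'C(V).
  apply: (key (W := K) abV Kt (subset_trans sQX sXK) nQt) => //.
  - exact: subsetP nVX t Xt.
  - exact: subset_trans sQX nVX.
set C := 'C_X(V).
have nCX : C <| X by have := subcent_normal X V; rewrite (setIidPl nVX).
have CH : C / H <| K / H by rewrite -XH; apply: morphim_normal.
case/simpleP: simB => _ /(_ (C / H)%G CH) [C1 | CK].
  have qM : M / H = Sb.
    by rewrite /M /= quotientE morphim_setIpre -quotientE XH (setIidPr sSb).
  have sylQH : 2.-Sylow(M / H) (Q / H).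
    by apply: morphim_pSylow => //; apply: subset_trans sQX nHX.
  have oQH : #|Q / H| = #|Sb|.
    by move: sylQH; rewrite qM => sylQH; rewrite (card_Hall sylQH) part_pnat_id.
  have : Q / H \subset C / H by apply: quotientS; rewrite subsetI sQX.
  rewrite C1 => sQ1; have := subset_leq_card sQ1; rewrite cards1 oQH => le1.
  by move: ntSb; rewrite -cardG_gt1 ltnNge le1.
- have d3 : 3 %| #|K / H| by rewrite B60.
  have [xb Kx ox] := Cauchy (isT : prime 3) d3.
  rewrite -CK in Kx; case/morphimP: Kx => c Nc Cc xE.
  have d3c : 3 %| #[c] by rewrite -ox xE morph_order.
  set c' := c ^+ (#[c] %/ 3).
  have oc' : #[c'] = 3 := elt_order d3c.
  have Cc' : c' \in C := groupX _ Cc.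
  have [v Vv ntv] := trivgPn _ ntV.
  have Kc' : c' \in K := subsetP sXK _ (subsetP (subsetIl _ _) _ Cc').
  have cc'v : commute c' v.
    by have := subsetP (subsetIr X 'C(V)) _ Cc'; move/centP; apply.
  by move: ntv; rewrite (fpfK _ _ Kc' oc' Vv cc'v) eqxx.
Qed.

End CaseA.


Section CaseB.
Variable gT : finGroupType.

Lemma p_not_dvd60 p : prime p -> p != 2 -> p != 3 -> p != 5 -> ~~ (p %| 60).
Proof.
move=> pp p2 p3 p5; rewrite (_ : 60 = 2 * (2 * (3 * 5)))%N //.
by rewrite !Euclid_dvdM // !dvdn_prime2 // (negPf p2) (negPf p3) (negPf p5).
Qed.

Lemma p_gt3 p : prime p -> p != 2 -> p != 3 -> 3 < p.
Proof.
move=> pp p2 p3; have := prime_gt1 pp.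
by case: p pp p2 p3 => [|[|[|[|p]]]].
Qed.

Lemma topA5 (G N H : {group gT}) (y : gT) (p : nat) : prime p -> p != 2 -> p != 3 -> p != 5 ->
  N \subset G -> y \in G -> #[y] = p -> y \in 'N(N) -> coprime p #|N| ->
  H <| N -> N / H \isog 'Alt_('I_5) -> ~ pg_adj G 3 5 -> pg_adj G 3 p.
Proof.
move=> pp p2 p3 p5 sNG Gy oy nNy coN nHN iso no15.
have [N60 simN _] := A5data iso.
have sHN := normal_sub nHN; have nHN' := normal_norm nHN.
have co60 : coprime 60 p by rewrite coprime_sym prime_coprime // p_not_dvd60.
case: (boolP (y \in 'N(H))) => nHy.
- pose A := <[y]>%G.
  have nHA : A \subset 'N(H) by rewrite cycle_subG.
  have solA : solvable A by apply: abelian_sol; apply: cycle_abelian.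
  have oA : #|A| = p by rewrite -orderE oy.
  have nNA : A \subset 'N(N) by rewrite cycle_subG.
  have coAb : coprime #|N / H| #|A / H|.
    rewrite N60; apply: coprime_dvdr co60; rewrite -oA; exact: dvdn_morphim.
  have [Tb sylT nTA] := sol_coprime_Sylow_exists 3 (quotient_sol H solA)
     (quotient_norms H nNA) coAb.
  have oT : #|Tb| = 3.
    by rewrite (card_Hall sylT) N60 p_part -natTrecE.
  have pAb : p.-group (A / H).
    by rewrite /pgroup; apply: pnat_dvd (dvdn_morphim _ _) _; rewrite oA pnat_id.
  have actT : [acts A / H, on Tb | 'J] by rewrite astabsJ.
  have := pgroup_fix_mod pAb actT.
  rewrite /= -/(setI Tb _) afixJ oT => E.
  have cT : 'C_Tb(A / H) = Tb.
    apply/eqP; rewrite eqEcard subsetIl oT.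
    have le3 : #|'C_Tb(A / H)| <= 3 by rewrite -oT subset_leq_card ?subsetIl.
    have gt3 := p_gt3 pp p2 p3.
    move: E; rewrite !modn_small //; last exact: leq_ltn_trans le3 gt3.
    by move=> E3; rewrite /A /= -E3.
  have d3 : 3 %| #|Tb| by rewrite oT.
  have [xb Tx ox] := Cauchy (isT : prime 3) d3.
  have sTN : Tb \subset N / H := pHall_sub sylT.
  have Cx : xb \in 'C_(N / H)(A / H).
    have : xb \in 'C_Tb(A / H) by rewrite cT.
    by case/setIP => Tx' Cx'; rewrite inE (subsetP sTN) // Cx'.
  have sRN : H :&: [~: N, A] \subset N by rewrite subIset ?sHN.
  have coR : coprime #|H :&: [~: N, A]| #|A|.
    by rewrite oA; apply: coprime_dvdl (cardSg sRN) _; rewrite coprime_sym.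
  have E2 := strongest_coprime_quotient_cent nHA sRN coR (introT orP (or_intror solA)).
  rewrite -E2 in Cx; case/morphimP: Cx => g Ng Cg xE.
  have d3g : 3 %| #[g] by rewrite -ox xE morph_order.
  set g' := g ^+ (#[g] %/ 3).
  have og' : #[g'] = 3 := elt_order d3g.
  have Cg' : g' \in 'C_N(A) := groupX _ Cg.
  have cg'y : commute g' y.
    by case/setIP: Cg' => _; rewrite cent_cycle => /cent1P.
  apply: (adj_commute (x := g') (y := y)) => //.
  - by rewrite (subsetP sNG) //; case/setIP: Cg'.
  - by rewrite og' oy prime_coprime // dvdn_prime2 // eq_sym.
  - by rewrite og'.
  - by rewrite oy.
- exfalso; apply: no15.
  set Hy := (H :^ y)%G.
  have NN : N :^ y = N by apply/normP.
  have nHyN : Hy <| N by rewrite /= -[N in _ <| N]NN normalJ.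
  have nHyN' := normal_norm nHyN; have sHyN := normal_sub nHyN.
  have neH : (H :^ y) != H by apply: contra nHy => /eqP e; apply/normP.
  set J := (H <*> Hy)%G.
  have nJN : J <| N := normalY nHN nHyN.
  have sHJ : H \subset J := joing_subl _ _.
  have nHJ : H <| J := normalS sHJ (normal_sub nJN) nHN.
  have JH : J / H <| N / H := morphim_normal _ nJN.
  case/simpleP: simN => _ /(_ (J / H)%G JH) [J1 | JN].
    have : J / H \subset [1] by rewrite /= J1.
    rewrite quotient_sub1 ?(subset_trans (normal_sub nJN) nHN') // => sJH.
    have sHyH : H :^ y \subset H := subset_trans (joing_subr _ _) sJH.
    by move: neH; rewrite eqEcard sHyH cardJg leqnn.
  have JeN : J :=: N := quotient_inj nHJ nHN JN.
  have JM : J = H * Hy :> {set gT} by rewrite /= norm_joinEr // (subset_trans sHyN nHN').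
  have HyH : Hy / H = N / H by rewrite -JeN JM quotientMidl.
  have HHy : H / Hy = N / Hy by rewrite -JeN JM quotientMidr.
  have d3 : 3 %| #|N / H| by rewrite N60.
  have [xb Nx ox] := Cauchy (isT : prime 3) d3.
  have : xb \in Hy / H by rewrite HyH.
  case/morphimP => a Na Hya xE.
  have N60' : #|N / Hy| = 60.
    by rewrite -N60 !card_quotient // -!divgS ?sHN //= cardJg.
  have d5 : 5 %| #|N / Hy| by rewrite N60'.
  have [zb Nz oz] := Cauchy (isT : prime 5) d5.
  have : zb \in H / Hy by rewrite HHy.
  case/morphimP => b Nb Hb zE.
  have Na' : a \in 'N(Hy) := subsetP (normG Hy) a Hya.
  have Nb' : b \in 'N(H) := subsetP (normG H) b Hb.
  have d3x : 3 %| #[a * b].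
    rewrite -ox; have -> : xb = coset H (a * b) by rewrite morphM //= (coset_id Hb) mulg1.
    by apply: morph_order; rewrite groupM.
  have d5x : 5 %| #[a * b].
    rewrite -oz; have -> : zb = coset Hy (a * b) by rewrite morphM //= (coset_id Hya) mul1g.
    by apply: morph_order; rewrite groupM.
  apply: (adj_dvd (x := a * b)).
    by apply: (subsetP sNG); apply: groupM; [exact: (subsetP sHyN) | exact: (subsetP sHN)].
  by rewrite Gauss_dvd // d3x d5x.
Qed.

End CaseB.


Section Walk.
Variable gT : finGroupType.

Definition relAb := [rel A B : {group gT} | (B <| A) && abelian (A / B)].

Lemma relAbI (D A B : {group gT}) : relAb A B -> relAb (D :&: A)%G (D :&: B)%G.
Proof.
case/andP => nBA abAB; have sBA := normal_sub nBA.
have eI : (D :&: A) :&: B = D :&: B by rewrite -setIA (setIidPr sBA).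
apply/andP; split.
  by rewrite /= -eI; apply: normalGI (subsetIr _ _) nBA.
have nB : D :&: A \subset 'N(B) := subset_trans (subsetIr _ _) (normal_norm nBA).
have iso := second_isog nB.
rewrite /= setIC in iso.
rewrite -[(D :&: A) :&: B]/((D :&: A)%G :&: B) eI in iso.
by rewrite (isog_abelian iso); apply: abelianS abAB; apply: quotientS; apply: subsetIr.
Qed.


Lemma chain_sub s (N : {group gT}) : path relAb N s -> last N s \subset N.
Proof.
elim: s N => [|N1 s IH] N /=; first by [].
case/andP => /andP[nN1N _] pth.
exact: subset_trans (IH _ pth) (normal_sub nN1N).
Qed.

Lemma isoD (D L H : {group gT}) : D <| L -> H <| L -> L / H \isog 'Alt_('I_5) ->
  ~~ (L^`(1) \subset D) || ((D :&: L) / (D :&: H) \isog 'Alt_('I_5)).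
Proof.
move=> nDL nHL iso.
have [_ simL _] := A5data iso.
have sHL := normal_sub nHL; have sDL := normal_sub nDL.
have nHL' := normal_norm nHL.
case sLD : (L^`(1) \subset D) => //=.
have DL : D :&: L = D by apply/setIidPl.
have XH : D / H <| L / H := morphim_normal _ nDL.
case/simpleP: simL => _ /(_ (D / H)%G XH) [X1 | XL].
  have : D / H \subset [1] by rewrite /= X1.
  rewrite quotient_sub1 ?(subset_trans sDL nHL') // => sDH.
  have : abelian (L / H) by apply: sub_der1_abelian; apply: subset_trans sLD sDH.
  rewrite (isog_abelian iso) => abA.
  have c5 : 4 < #|'I_5| by rewrite card_ord.
  by have := solvable_AltF c5; rewrite abelian_sol.
have nD : D \subset 'N(H) := subset_trans sDL nHL'.
have iso2 := second_isog nD.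
rewrite DL.
have e : H :&: D = D :&: H by rewrite setIC.
rewrite -e; apply: isog_trans iso2 _.
by rewrite /= XL.
Qed.

Lemma caseB (G : {group gT}) (y : gT) (p : nat) : prime p -> p != 2 -> p != 3 -> p != 5 ->
  y \in G -> #[y] = p -> ~ pg_adj G 3 5 ->
  forall s (N L H : {group gT}), path relAb N s -> last N s = L -> H <| L ->
  L / H \isog 'Alt_('I_5) ->
  N \subset G -> y \in 'N(N) -> coprime p #|N| -> pg_adj G 3 p.
Proof.
move=> pp p2 p3 p5 Gy oy no15 s0.
have [n] := ubnP (size s0); elim: n s0 => // n IH0 s0 lts N L H.
case: s0 lts => [|N1 s] lts.
  move=> _ /= <- nHN iso sNG nNy coN.
  exact: topA5 pp p2 p3 p5 sNG Gy oy nNy coN nHN iso no15.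
rewrite /= => /andP[rNN1 pth] lastE nHL iso sNG nNy coN.
case/andP: (rNN1) => nN1N abN.
set D := (N^`(1))%G.
have sDN1 : D \subset N1 := der1_min (normal_norm nN1N) abN.
have sDN : D \subset N := der_sub 1 N.
have sLN : L \subset N by rewrite -lastE; apply: (chain_sub (s := N1 :: s)); rewrite /= rNN1.
have nDN : D <| N := der_normal 1 N.
have nDL : (L :&: D)%G <| L := normalGI sLN nDN.
pose f := fun B : {group gT} => (D :&: B)%G.
have sHL := normal_sub nHL.
apply: (IH0 (map f s) _ (f N1) (f L) (f H)); first by rewrite size_map.
- rewrite path_map; apply: sub_path pth => A B /=; exact: relAbI.
- by rewrite last_map lastE.
- have eI : (D :&: L) :&: H = D :&: H by rewrite -setIA (setIidPr sHL).
  by rewrite /= -eI; apply: normalGI (subsetIr _ _) nHL.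
- have := isoD nDL nHL iso.
  have sLD : L^`(1) \subset L :&: D.
    by rewrite subsetI der_sub /=; apply: dergS.
  rewrite sLD /= => iso2.
  have e1 : (L :&: D) :&: L = D :&: L by rewrite setIC setIA setIid setIC.
  have e2 : (L :&: D) :&: H = D :&: H by rewrite [L :&: D]setIC -setIA (setIidPr sHL).
  by move: iso2; rewrite /= e1 e2.
- exact: subset_trans (subsetIl _ _) (subset_trans sDN sNG).
- have -> : (f N1 : {set gT}) = D by apply/setIidPl.
  have : <[y]> \subset 'N(N) by rewrite cycle_subG.
  by move/(char_norm_trans (der_char 1 N)); rewrite cycle_subG.
- exact: coprime_dvdr (cardSg (subset_trans (subsetIl _ _) sDN)) coN.
Qed.

End Walk.


Section Walk2.
Variable gT : finGroupType.
Local Notation compo := [rel x y : {group gT} | maxnormal y x x].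

Lemma walkB s (N : {group gT}) : path compo N s -> last N s = 1%G -> good_factors N s ->
  ~~ solvable N -> exists s0 (L H : {group gT}),
    [/\ path (@relAb gT) N s0, last N s0 = L, H <| L & L / H \isog 'Alt_('I_5)].
Proof.
elim: s N => [|N1 s IH] N /=.
  by move=> _ -> _; rewrite solvable1.
move=> /andP[mx pth] lastE; rewrite /good_factors /= => /andP[gf gfs] nsol.
have nN1N : N1 <| N := maxnormal_normal mx.
case/orP: gf => [cyc | iso].
  have nsol1 : ~~ solvable N1.
    apply: contra nsol => sol1; rewrite (series_sol nN1N) sol1 /=.
    exact: abelian_sol (cyclic_abelian cyc).
  have [s0 [L [H [p0 l0 nHL isoL]]]] := IH N1 pth lastE gfs nsol1.
  exists (N1 :: s0), L, H; split => //=.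
  by rewrite p0 andbT nN1N cyclic_abelian.
by exists [::], N, N1.
Qed.

Lemma walkTop (G : {group gT}) p : prime p -> p != 2 -> p != 3 -> p != 5 ->
  ~ pg_adj G 2 3 -> ~ pg_adj G 3 5 -> ~ pg_adj G 3 p ->
  forall s (N : {group gT}), path compo N s -> last N s = 1%G -> good_factors N s ->
  ~~ solvable N -> N \subset G -> p %| #|N| -> False.
Proof.
move=> pp p2 p3 p5 no6 no15 no3p s; elim: s => [|N1 s IH] N /=.
  by move=> _ -> _; rewrite solvable1.
move=> /andP[mx pth] lastE; rewrite /good_factors /= => /andP[gf gfs] nsol sNG pN.
have nN1N : N1 <| N := maxnormal_normal mx.
have sN1N := normal_sub nN1N.
have nsol1 : cyclic (N / N1) -> ~~ solvable N1.
  move=> cyc; apply: contra nsol => sol1; rewrite (series_sol nN1N) sol1 /=.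
  exact: abelian_sol (cyclic_abelian cyc).
case pN1 : (p %| #|N1|).
  case/orP: gf => [cyc | iso].
    exact: IH N1 pth lastE gfs (nsol1 cyc) (subset_trans sN1N sNG) pN1.
  exact: caseA pp p2 p3 nN1N iso pN1 (fun h => no6 (adj_sub sNG h))
    (fun h => no3p (adj_sub sNG h)).
have pNq : p %| #|N / N1|.
  move: pN; rewrite -(Lagrange sN1N) Euclid_dvdM // pN1 /=.
  by rewrite card_quotient // normal_norm.
case/orP: gf => [cyc | iso].
  have [y Ny oy] := Cauchy pp pN.
  have nN1y : y \in 'N(N1) := subsetP (normal_norm nN1N) y Ny.
  have coN1 : coprime p #|N1| by rewrite prime_coprime // pN1.
  have [s0 [L [H [p0 l0 nHL isoL]]]] := walkB pth lastE gfs (nsol1 cyc).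
  apply: no3p.
  exact: (@caseB gT G y p pp p2 p3 p5 (subsetP sNG y Ny) oy no15 s0 N1 L H p0 l0 nHL isoL (subset_trans sN1N sNG) nN1y coN1).
have [N60 _ _] := A5data iso.
by move: pNq; rewrite N60 (negPf (p_not_dvd60 pp p2 p3 p5)).
Qed.

End Walk2.

Theorem mainTheorem5 (gT : finGroupType) (G : {group gT}) :
  strictly_pseudo_solvable G ->
  cpg_edge G 2 3 -> cpg_edge G 2 5 -> cpg_edge G 3 5 ->
  forall p : nat, prime p -> p %| #|G| -> p != 2 -> p != 3 -> p != 5 ->
    ~ cpg_edge G 3 p.
Proof.
move=> [ps nsol] [_ no6] _ [_ no15] p pp pG p2 p3 p5 [_ no3p].
have [s cs] := exists_comps G.
have gf := ps s cs.
case/compsP: cs => lastE pth.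
exact: (@walkTop gT G p pp p2 p3 p5 no6 no15 no3p s G pth lastE gf nsol (subxx _) pG).
Qed.
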